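(* Let $k\le n$ be positive integers. The set $\mathcal C_{n,k}$ (the neglex standard monomial basis of $S_{n,k}$) consists exactly of the monomials $x_1^{a_1}\cdots x_n^{a_n}$ whose exponent sequence $(a_1,\dots,a_n)$ is componentwise $\le$ some $(n,k)$-staircase.
   Context: $S_{n,k}=\mathbb F[x_1,\dots,x_n]/J_{n,k}$, where $J_{n,k}$ is generated by $h_k(x_1),h_k(x_1,x_2),\dots,h_k(x_1,\dots,x_n)$ (complete homogeneous symmetric polynomials) and $e_n,e_{n-1},\dots,e_{n-k+1}$ (elementary symmetric polynomials in $x_1,\dots,x_n$). For $S=\{s_1<\cdots<s_m\}\subseteq[n]$, $\mathbf x(S)^*=x_{n-s_1+1}^{s_1}x_{n-s_2+1}^{s_2-1}\cdots x_{n-s_m+1}^{s_m-m+1}$. $\mathcal C_{n,k}$ is the set of monomials $m$ with $x_i^k\nmid m$ for all $i$ and $\mathbf x(S)^*\nmid m$ for all $S\subseteq[n]$ with $|S|=n-k+1$. A shuffle of sequences $(a_1,\dots,a_r)$ and $(b_1,\dots,b_s)$ is an interleaving preserving the relative order of the $a$'s and of the $b$'s. An $(n,k)$-staircase is a shuffle of $(k-1,k-2,\dots,1,0)$ with the sequence $(k-1,\dots,k-1)$ consisting of $n-k$ copies of $k-1$. *)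

(* Defs.v *)
From mathcomp Require Import all_boot.
Set Implicit Arguments. Unset Strict Implicit. Unset Printing Implicit Defensive.

(* A monomial x_1^{a_1} ... x_n^{a_n} is represented by its exponent vector
   a : 'I_n -> nat; variable x_{i+1} corresponds to the ordinal i (0-based). *)
Definition monomial (n : nat) := 'I_n -> nat.

Definition mdiv (n : nat) (m1 m2 : monomial n) : Prop := forall i, m1 i <= m2 i.

(* S is given 0-based: the
   ordinal t stands for s = t+1.  The j-th smallest element s_j contributes the
   factor x_{n - s_j + 1}^{s_j - j + 1}; 0-based variable index n - s_j = n-1-t,
   i.e. t = rev_ord i, and j - 1 = #{u in S | u < t}. *)
Definition xSstar (n : nat) (S : {set 'I_n}) : monomial n :=
  fun i => if rev_ord i \in S
           then (rev_ord i).+1 - #|[set u in S | u < rev_ord i]|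
           else 0.

Definition Cnk (n k : nat) (m : monomial n) : Prop :=
  (forall i, ~~ (k <= m i))
  /\ (forall S : {set 'I_n}, #|S| = n - k + 1 -> ~ mdiv (xSstar S) m).

Definition shuffle (s u v : seq nat) : Prop :=
  exists b : bitseq, size b = size s /\ mask b s = u /\ mask (map negb b) s = v.

Definition staircase (n k : nat) (s : seq nat) : Prop :=
  shuffle s (rev (iota 0 k)) (nseq (n - k) k.-1).

(* Main.v *)
Require Import Defs.
From mathcomp Require Import all_boot zify.
Set Implicit Arguments. Unset Strict Implicit. Unset Printing Implicit Defensive.

Fixpoint G (a : seq nat) : nat := if a is x :: a' then G a' + (x <= G a') else 0.

Lemma G_size a : G a <= size a.
Proof. elim: a => //= x a IH; case: (x <= G a) => /=; lia. Qed.

Lemma shuffle_size s u v : shuffle s u v -> size s = size u + size v.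
Proof.
case=> b [Hb [<- <-]].
rewrite !size_mask ?size_map // -Hb.
elim: b {Hb} => //= [[]] b IH /=; lia.
Qed.

Lemma shuffle_nil u v : shuffle [::] u v -> u = [::] /\ v = [::].
Proof. by case=> b [_ [<- <-]]; case: b. Qed.

Lemma shuffle_cons x s u v : shuffle (x :: s) u v ->
  (exists u', u = x :: u' /\ shuffle s u' v) \/ (exists v', v = x :: v' /\ shuffle s u v').
Proof.
case=> [[|bb b]] [//= Hb [Hu Hv]].
case: bb Hu Hv => /= Hu Hv.
- left; exists (mask b s); split=> //; exists b; split=> //; by case: Hb.
- right; exists (mask (map negb b) s); split=> //; exists b; split=> //; by case: Hb.
Qed.

Lemma shuffle_consl x s u v : shuffle s u v -> shuffle (x :: s) (x :: u) v.
Proof. case=> b [Hb [Hu Hv]]; exists (true :: b) => /=; by rewrite Hb Hu Hv. Qed.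

Lemma shuffle_consr x s u v : shuffle s u v -> shuffle (x :: s) u (x :: v).
Proof. case=> b [Hb [Hu Hv]]; exists (false :: b) => /=; by rewrite Hb Hu Hv. Qed.

Lemma rev_iotaS j : rev (iota 0 j.+1) = j :: rev (iota 0 j).
Proof. by rewrite -addn1 iotaD rev_cat /= add0n. Qed.

Definition good c j r a := exists s, shuffle s (rev (iota 0 j)) (nseq r c) /\
  (forall i, i < size a -> nth 0 a i <= nth 0 s i).

Lemma good_iff c a : forall j r, j <= c.+1 -> size a = j + r ->
  (good c j r a <-> all (fun x => x <= c) a /\ j <= G a).
Proof.
elim: a => [|x a IH] j r Hj Hs.
  have [-> ->] : j = 0 /\ r = 0 by simpl in Hs; lia.
  split=> // _; exists [::]; split=> //; exists [::]; done.
split.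
- case=> s [Hsh Hle].
  have := shuffle_size Hsh; rewrite size_rev size_iota size_nseq.
  case: s Hsh Hle => [|y s] Hsh Hle; first by move=> /= ?; simpl in Hs; lia.
  move=> Hsz.
  have Hx : x <= y by apply: (Hle 0).
  have Hle' : forall i, i < size a -> nth 0 a i <= nth 0 s i by move=> i Hi; apply: (Hle i.+1).
  case: (shuffle_cons Hsh) => [[u' [Hu Hsh']]|[v' [Hv Hsh']]]; clear Hsh Hsz.
  + case: j Hj Hs Hu => [|j'] Hj Hs Hu; first by [].
    rewrite rev_iotaS in Hu; case: Hu => Hy Hu'; subst y u'.
    have [Ha Hg] : all (fun x => x <= c) a /\ j' <= G a.
      apply/(IH j' r) => //; [lia | simpl in Hs; lia | by exists s].
    rewrite /= Ha andbT; split; first lia.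
    have -> : x <= G a by lia.
    lia.
  + case: r Hs Hv => [|r'] Hs Hv; first by [].
    case: Hv => Hy Hv'; subst y v'.
    have [Ha Hg] : all (fun x => x <= c) a /\ j <= G a.
      apply/(IH j r') => //; [simpl in Hs; lia | by exists s].
    rewrite /= Ha andbT; split; first lia.
    lia.
- rewrite /= => [[/andP [Hxc Ha] Hg]].
  case Hxg: (x <= G a) Hg => /= Hg.
  + case: (leqP j (G a)) => Hj2.
    * case: r Hs => [|r'] Hs.
        have := G_size a; simpl in Hs; lia.
      have [s [Hsh Hle]] : good c j r' a by apply/(IH j r') => //; simpl in Hs; lia.
      exists (c :: s); split; first exact: shuffle_consr.
      by case=> [|i] //= Hi; apply: Hle.
    * have Hjeq : j = (G a).+1 by lia.
      have [s [Hsh Hle]] : good c (G a) r a.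
        apply/(IH (G a) r) => //; [lia | simpl in Hs; lia].
      exists (G a :: s); split; first by (rewrite Hjeq rev_iotaS; exact: shuffle_consl).
      case=> [|i] /= Hi; [by rewrite Hxg | exact: Hle].
  + rewrite addn0 in Hg.
    case: r Hs => [|r'] Hs.
      have := G_size a; simpl in Hs; lia.
    have [s [Hsh Hle]] : good c j r' a by apply/(IH j r') => //; simpl in Hs; lia.
    exists (c :: s); split; first exact: shuffle_consr.
    by case=> [|i] //= Hi; apply: Hle.
Qed.

Lemma down_ind (P : nat -> Prop) n : (forall i, n <= i -> P i) ->
  (forall i, i < n -> P i.+1 -> P i) -> forall i, P i.
Proof.
move=> H0 HS i.
suff: forall d i, n - i <= d -> P i by move/(_ (n - i) i (leqnn _)).
elim=> [|d IH] {}i Hi; first by apply: H0; lia.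
case: (leqP n i) => Hn; first exact: H0.
apply: HS => //; apply: IH; lia.
Qed.

Section Cnt.
Variable n : nat.
Definition cnt (A : {set 'I_n}) (i : nat) := #|[set j in A | i <= j]|.

Lemma cnt_ge A i : n <= i -> cnt A i = 0.
Proof.
move=> H; rewrite /cnt; apply/eqP; rewrite cards_eq0; apply/eqP/setP => j.
rewrite !inE; apply/negbTE/andP => [[_ Hj]]; have := ltn_ord j; lia.
Qed.

Lemma cnt_S A i (h : i < n) : cnt A i = (Ordinal h \in A) + cnt A i.+1.
Proof.
rewrite /cnt.
case HA: (Ordinal h \in A) => /=.
- have -> : [set j in A | i <= j] = Ordinal h |: [set j in A | i.+1 <= j].
    apply/setP => j; rewrite !inE -val_eqE /=.
    case: (ltngtP i j) => //= Hij.
    have -> : j = Ordinal h by apply: val_inj => /=; rewrite Hij.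
    by rewrite HA.
  rewrite cardsU1 inE /= ltnn andbF; done.
- rewrite ?add0n; apply: eq_card => j; rewrite !inE.
  case: (ltngtP i j) => //= Hij.
  have -> : j = Ordinal h by apply: val_inj => /=; rewrite Hij.
  by rewrite HA.
Qed.

Lemma cnt0 A : cnt A 0 = #|A|.
Proof. rewrite /cnt; apply: eq_card => j; by rewrite !inE andbT. Qed.

Lemma cnt_mono A i : cnt A i.+1 <= cnt A i.
Proof.
case: (ltnP i n) => h; first by rewrite (cnt_S A h); lia.
have -> : cnt A i.+1 = 0 by apply: cnt_ge; lia. done.
Qed.

Lemma cnt_compl A : forall i, cnt A i + cnt (~: A) i = n - i.
Proof.
apply: (@down_ind _ n) => i Hi.
  rewrite !cnt_ge //; lia.
move=> IH; rewrite (cnt_S A Hi) (cnt_S (~: A) Hi) inE.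
case: (Ordinal Hi \in A) => /=; lia.
Qed.

End Cnt.

Section M.
Variables (n : nat) (m : 'I_n -> nat).
Definition aseq := [seq m j | j <- enum 'I_n].
Definition Gi i := G (drop i aseq).

Lemma size_a : size aseq = n.
Proof. by rewrite size_map size_enum_ord. Qed.

Lemma nth_a i (h : i < n) : nth 0 aseq i = m (Ordinal h).
Proof.
rewrite (nth_map (Ordinal h)); last by rewrite size_enum_ord.
by rewrite (nth_ord_enum (Ordinal h) (Ordinal h)).
Qed.

Lemma Gi_S i (h : i < n) : Gi i = Gi i.+1 + (m (Ordinal h) <= Gi i.+1).
Proof. by rewrite /Gi (drop_nth 0) ?size_a // nth_a. Qed.

Lemma Gi_ge i : n <= i -> Gi i = 0.
Proof. by move=> H; rewrite /Gi drop_oversize // size_a. Qed.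

Definition Q := [set j : 'I_n | m j <= Gi j.+1].

Lemma cntQ : forall i, cnt Q i = Gi i.
Proof.
apply: (@down_ind _ n) => i Hi; first by rewrite cnt_ge // Gi_ge.
move=> IH; rewrite (cnt_S Q Hi) (Gi_S Hi) IH inE /=; lia.
Qed.

Definition badT (T : {set 'I_n}) :=
  forall i : 'I_n, i \in T -> n - i - cnt T i.+1 <= m i.

Lemma xS_bad S : mdiv (xSstar S) m <-> badT [set i | rev_ord i \in S].
Proof.
have Hc : forall i : 'I_n, #|[set u in S | u < rev_ord i]| = cnt [set i | rev_ord i \in S] i.+1.
  move=> i; rewrite /cnt -(card_preimset _ (@rev_ord_inj n)); apply: eq_card => j.
  rewrite !inE /=; have := ltn_ord i; have := ltn_ord j.
  case: (rev_ord j \in S) => //= Hj Hi'; apply/idP/idP; lia.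
rewrite /mdiv /xSstar /badT; split.
- move=> H i; rewrite inE => Hi; have := H i; rewrite Hi -Hc /=.
  have := ltn_ord i; lia.
- move=> H i; case Hi: (rev_ord i \in S) => //.
  have := H i; rewrite inE Hi -Hc => /(_ isT) /=; have := ltn_ord i; lia.
Qed.

Lemma Cnk_part k : 0 < k -> k <= n -> (forall i, m i < k) ->
  ((forall S : {set 'I_n}, #|S| = n - k + 1 -> ~ mdiv (xSstar S) m) <-> k <= Gi 0).
Proof.
move=> hk hkn hm; split; last first.
- move=> HG S HS /xS_bad; set T := [set i | rev_ord i \in S] => HT.
  have HTc : #|T| = n - k + 1 by rewrite card_preimset //; exact: rev_ord_inj.
  have HQ : #|Q| = Gi 0 by rewrite -cnt0 cntQ.
  have HU : #|Q :|: T| <= n by have := max_card (Q :|: T); rewrite card_ord.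
  have HI := cardsUI Q T.
  have : 0 < #|Q :&: T| by lia.
  case/card_gt0P => p0 Hp0.
  case: (arg_maxnP (fun j : 'I_n => val j) Hp0) => p Hp Hmax.
  move/setIP: Hp => [HpQ HpT].
  have H1 := HT p HpT.
  move: HpQ; rewrite inE -cntQ => HpQ.
  have H2 : cnt Q p.+1 <= cnt (~: T) p.+1.
    apply: subset_leq_card; apply/subsetP => j; rewrite !inE => /andP [HjQ Hpj].
    rewrite Hpj andbT; apply/negP => HjT.
    have : j \in Q :&: T by rewrite !inE HjT andbT.
    move/Hmax => /=; lia.
  have H3 := cnt_compl T p.+1.
  have := ltn_ord p. move: H1 HpQ H2 H3. set a1 := cnt T _. set a2 := cnt (~: T) _. set a3 := cnt Q _. set a4 := m p. lia.
- move=> HS; case: (leqP k (Gi 0)) => // HG; exfalso.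
  set T := [set i : 'I_n | (i \notin Q) && (cnt (~: Q) i <= (n - k + 1))].
  have HcT : forall i, cnt T i = minn (cnt (~: Q) i) (n - k + 1).
    apply: (@down_ind _ n) => i Hi; first by rewrite !cnt_ge // min0n.
    move=> IH; rewrite (cnt_S T Hi) IH [Ordinal Hi \in T]inE (cnt_S (~: Q) Hi) !in_setC.
    set x := cnt (~: Q) i.+1.
    case: (Ordinal Hi \in Q) => /=; [lia|].
    case: (leqP (1 + x) (n - k + 1)) => /= H; lia.
  have HTc : #|T| = (n - k + 1).
    rewrite -cnt0 HcT; have := cnt_compl Q 0; rewrite cntQ. move: HG. set y := cnt (~: Q) 0. set z := Gi 0. lia.
  apply: (HS [set i | rev_ord i \in T]).
    by rewrite card_preimset //; exact: rev_ord_inj.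
  apply/xS_bad.
  have -> : [set i | rev_ord i \in [set i | rev_ord i \in T]] = T.
    by apply/setP => i; rewrite !inE rev_ordK.
  move=> i; rewrite inE => /andP [HiQ Hic].
  move: HiQ; rewrite inE -ltnNge => HiQ.
  have := HcT i.+1; have := cnt_mono (~: Q) i; have := cnt_compl Q i.+1.
  rewrite cntQ; have := ltn_ord i; move: HiQ Hic. set y1 := cnt (~: Q) i.+1. set y2 := cnt (~: Q) i. set y3 := cnt T i.+1. set y4 := Gi i.+1. lia.
Qed.
End M.

Theorem mainTheorem5 (n k : nat) (hk : 0 < k) (hkn : k <= n) (m : monomial n) :
  Cnk k m <->
  exists s : seq nat, staircase n k s /\ (forall i : 'I_n, m i <= nth 0 s i).
Proof.
have Hstair : (exists s : seq nat, staircase n k s /\ (forall i : 'I_n, m i <= nth 0 s i))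
   <-> good k.-1 k (n - k) (aseq m).
  split; case=> s [Hs Hle]; exists s; split=> //.
  - move=> i Hi; rewrite size_a in Hi; rewrite (nth_a m Hi); exact: Hle.
  - move=> i; have := Hle i; rewrite size_a (nth_a m (ltn_ord i)) => /(_ (ltn_ord i)).
    by have -> : Ordinal (ltn_ord i) = i by apply: val_inj.
have Hall : all (fun x => x <= k.-1) (aseq m) <-> (forall i, m i < k).
  split.
  - move/allP => H i; have := H (m i) (map_f _ (mem_enum _ i)); lia.
  - move=> H; apply/allP => x /mapP [i _ ->]; have := H i; lia.
rewrite Hstair (@good_iff k.-1 (aseq m) k (n - k)); last 2 first.
  - lia.
  - rewrite size_a; lia.
have HG : G (aseq m) = Gi m 0 by rewrite /Gi drop0.
rewrite HG /Cnk.
split.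
- case=> H1 H2.
  have Hm : forall i, m i < k by move=> i; have := H1 i; rewrite -ltnNge.
  split; first exact/Hall.
  exact/(Cnk_part hk hkn Hm).
- case=> /Hall Hm HGk; split.
  + by move=> i; rewrite -ltnNge.
  + exact/(Cnk_part hk hkn Hm).
Qed.
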